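(* Let $S$ be a numerical semigroup with multiplicity $m$, depth $q$, minimal generating set $P$, $D=S^*+S^*$, $L=\{s\in S: s<c\}$ and $X$ its set of nonzero Apéry elements. Then: (i) $\delta(x)\ge 0$ for all $x\in X$; (ii) $m=|P|+|X\cap D|$; (iii) $|L|=q+\tau(X)$.
   Context: A numerical semigroup is a subset $S\subseteq\mathbb N$ containing $0$, closed under addition, with finite complement. Let $S^*=S\setminus\{0\}$, $m=\min S^*$, $c=\max(\mathbb Z\setminus S)+1$ (conductor), $q=\lceil c/m\rceil$ (depth). $D=S^*+S^*=\{x+y: x,y\in S^*\}$ and $P=S^*\setminus D$. The Apéry set is $\{s\in S: s-m\notin S\}$, and $X$ is this set minus $\{0\}$. For $x\in S$, $\delta(x)$ is the unique integer such that $x+\delta(x)m\in[c,c+m-1]$, and for finite $A\subseteq S$, $\tau(A)=\sum_{x\in A}\delta(x)$. *)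

(* Defs.v *)
From mathcomp Require Import all_boot all_order all_algebra.
Set Implicit Arguments. Unset Strict Implicit. Unset Printing Implicit Defensive.
Import Order.TTheory GRing.Theory Num.Theory.

(* A numerical semigroup: a subset of nat containing 0, closed under addition,
   with finite complement (witnessed by a bound beyond which everything is in S). *)
Record numsg := NumSG {
  nsg :> pred nat;
  nsg_0 : nsg 0;
  nsg_add : forall x y, nsg x -> nsg y -> nsg (x + y);
  nsg_bound : nat;
  nsg_cofin : forall k, nsg_bound <= k -> nsg k
}.

Section Defs.
Variable S : numsg.

Definition Sstar : pred nat := fun x => (0 < x) && S x.

Lemma Sstar_ex : exists n, Sstar n.
Proof.
exists (nsg_bound S).+1; apply/andP; split => //.
by apply: nsg_cofin; exact: leqnSn.
Qed.

Definition mult : nat := ex_minn Sstar_ex.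

(* conductor c = max (Z \ S) + 1; since negative integers are not in S and
   all k >= nsg_bound are in S, this is max{k+1 : k < bound, k \notin S}, or 0. *)
Definition conductor : nat :=
  \max_(k < nsg_bound S | ~~ S k) k.+1.

Definition depth : nat := (conductor + mult.-1) %/ mult.

Definition inD (x : nat) : bool :=
  [exists y : 'I_x.+1, Sstar y && Sstar (x - y)].

Definition inP (x : nat) : bool := Sstar x && ~~ inD x.

(* Apery set w.r.t. m : {s in S : s - m notin S} (s - m taken in Z) *)
Definition apery (s : nat) : bool := S s && ~~ ((mult <= s) && S (s - mult)).

Definition inX (x : nat) : bool := apery x && (x != 0).

(* delta(x): the unique integer d with x + d m in [c, c+m-1];
   explicitly d = floor((c + m - 1 - x) / m). *)
Definition delta (x : nat) : int :=
  ((((conductor + mult).-1)%:Z - x%:Z) %/ mult%:Z)%Z.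

(* tau(A) = sum over A of delta, for A given by a duplicate-free enumeration *)
Definition tau (s : seq nat) : int := (\sum_(x <- s) delta x)%R.

Definition cardL : nat := count S (iota 0 conductor).

End Defs.

Definition enumerates (s : seq nat) (A : pred nat) : Prop :=
  uniq s /\ forall x, (x \in s) = A x.

(* Main.v *)
Require Import Defs.
From mathcomp Require Import all_boot all_order all_algebra.
From mathcomp Require Import zify.
Import Order.TTheory GRing.Theory Num.Theory.
Set Implicit Arguments. Unset Strict Implicit. Unset Printing Implicit Defensive.

Section Aux.
Variable S : numsg.
Local Notation m := (mult S).
Local Notation c := (conductor S).

Lemma m_spec : [/\ 0 < m, S m & forall x, 0 < x -> S x -> m <= x].
Proof.
rewrite /mult; case: ex_minnP => n /andP[n0 Sn] H; split => // x x0 Sx.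
by apply: H; rewrite /Sstar x0.
Qed.

Lemma m_gt0 : 0 < m. Proof. by case: m_spec. Qed.
Lemma S_m : S m. Proof. by case: m_spec. Qed.
Lemma m_min x : 0 < x -> S x -> m <= x. Proof. by case: m_spec => _ _; apply. Qed.

Lemma cond_S k : c <= k -> S k.
Proof.
move=> ck; case: (leqP (nsg_bound S) k) => kb; first exact: nsg_cofin.
apply/negPn/negP => nS.
have : k.+1 <= c by rewrite /conductor; exact: (leq_bigmax_cond (F := fun i : 'I__ => (i : nat).+1) (Ordinal kb)).
lia.
Qed.

Lemma S_addm x k : S x -> S (x + k * m).
Proof.
move=> Sx; elim: k => [|k IH]; first by rewrite mul0n addn0.
by rewrite mulSn addnCA addnC; apply: nsg_add => //; exact: S_m.
Qed.

Lemma aex r : exists s, S s && (s %% m == r %% m).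
Proof.
exists (c * m + r); rewrite modnMDl eqxx andbT; apply: cond_S.
have := m_gt0; nia.
Qed.

Definition a r := ex_minn (aex r).

Lemma a_spec r : [/\ S (a r), a r %% m = r %% m &
   forall s, S s -> s %% m = r %% m -> a r <= s].
Proof.
rewrite /a; case: ex_minnP => n /andP[Sn /eqP nr] H; split => // s Ss sr.
by apply: H; rewrite Ss sr eqxx.
Qed.

Lemma mod_gap x y : x %% m = y %% m -> x < y -> x + m <= y.
Proof.
move=> e xy; have : m %| y - x by rewrite -eqn_mod_dvd ?e // ltnW.
move/dvdn_leq; have : 0 < y - x by lia.
move=> h /(_ h); lia.
Qed.

Lemma S_iff s r : s %% m = r %% m -> S s = (a r <= s).
Proof.
case: (a_spec r) => Sa am amin e; apply/idP/idP => [Ss|le]; first exact: amin.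
have : m %| s - a r by rewrite -eqn_mod_dvd // am e.
move/divnK => h; have -> : s = a r + (s - a r) %/ m * m by rewrite h; lia.
exact: S_addm.
Qed.

Lemma apery_a r : apery S (a r).
Proof.
case: (a_spec r) => Sa am amin; rewrite /apery Sa /=; apply/negP => /andP[ma Sam].
have : a r <= a r - m.
  apply: amin => //; rewrite -am -{2}(subnK ma) modnDr //.
have := m_gt0; lia.
Qed.

Lemma apery_eq x r : apery S x -> x %% m = r %% m -> x = a r.
Proof.
case/andP => Sx nap e; case: (a_spec r) => Sa am amin.
have le := amin _ Sx e; apply/eqP; rewrite eqn_leq le andbT; rewrite leqNgt; apply/negP => lt.
have g := mod_gap (etrans am (esym e)) lt.
move/negP: nap; apply; apply/andP; split; first lia.
rewrite (S_iff (r:=r)); first lia.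
rewrite -e -{2}(subnK (_ : m <= x)) ?modnDr //; lia.
Qed.

Lemma a0 : a 0 = 0.
Proof. case: (a_spec 0) => _ _ h; apply/eqP; rewrite -leqn0; apply: h => //; exact: nsg_0. Qed.

Lemma apery_lt x : apery S x -> x < c + m.
Proof.
case/andP => Sx nap; rewrite ltnNge; apply/negP => le; move/negP: nap; apply.
apply/andP; split; first lia; apply: cond_S; lia.
Qed.

Definition sX := [seq a r | r <- iota 1 m.-1].

Lemma sX_enum : enumerates sX (inX S).
Proof.
split.
  rewrite map_inj_in_uniq ?iota_uniq // => r1 r2; rewrite !mem_iota => h1 h2 e.
  case: (a_spec r1) (a_spec r2) => _ e1 _ [_ e2 _].
  have := m_gt0 => m0.
  rewrite -(modn_small (_ : r1 < m)); last lia.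
  rewrite -(modn_small (_ : r2 < m)); last lia.
  by rewrite -e1 -e2 e.
move=> x; apply/mapP/idP => [[r]|].
  rewrite mem_iota => hr ->; rewrite /inX apery_a /=.
  case: (a_spec r) => _ am _; apply/eqP => a0'.
  have m0 := m_gt0; move/andP: hr => [h1 h2].
  move: am; rewrite a0' mod0n modn_small; lia.
case/andP => ap x0; exists (x %% m); last exact: (apery_eq ap (esym (modn_mod _ _))).
rewrite mem_iota; have := m_gt0 => m0; have := ltn_pmod x m0.
case: (posnP (x %% m)) => [h|]; last lia.
move: x0; rewrite (apery_eq (r:=0) ap) ?a0 // h mod0n //.
Qed.

Lemma inP_iff x : inP S x = (x == m) || (inX S x && ~~ inD S x).
Proof.
have m0 := m_gt0.
apply/idP/idP.
  case/andP => /andP[x0 Sx] nD; case: eqP => //= xm; rewrite nD andbT /inX.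
  rewrite /apery Sx /=; apply/andP; split; last lia.
  apply/negP => /andP[mx Sxm]; move/negP: nD; apply; apply/existsP.
  have mx1 : m < x.+1 by lia.
  exists (Ordinal mx1).
  rewrite /Sstar /= S_m m0 /= Sxm andbT; lia.
case/orP => [/eqP->|/andP[/andP[/andP[Sx _] x0] nD]].
  rewrite /inP /Sstar m0 S_m /=; apply/negP => /existsP[y /andP[/andP[y0 Sy] /andP[y1 _]]].
  have := m_min y0 Sy; have := ltn_ord y; lia.
by rewrite /inP /Sstar Sx nD andbT lt0n x0.
Qed.

Lemma count_res (p : pred nat) l : count p l =
  \sum_(r < m) count (fun s => (s %% m == r) && p s) l.
Proof.
have m0 := m_gt0.
elim: l => [|x l IH] /=; first by rewrite big1.
rewrite big_split /= -IH; congr (_ + _).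
rewrite (bigD1 (Ordinal (ltn_pmod x m0))) //= eqxx /= big1 ?addn0 // => j.
by rewrite -val_eqE /= eq_sym => /negbTE ->.
Qed.

Lemma count_class w n : count (fun s => (s %% m == w %% m) && (w <= s)) (iota 0 n)
   = (n + m.-1 - w) %/ m.
Proof.
have m0 := m_gt0.
elim: n => [|n IH]; first by rewrite /= divn_small //; lia.
rewrite -addn1 iotaD count_cat IH /= addn0 add0n.
case: (leqP w n) => wn.
  have -> : n + 1 + m.-1 - w = (n - w + m.-1).+1 by lia.
  have -> : n + m.-1 - w = n - w + m.-1 by lia.
  rewrite divnS // andbT addnC; congr (_ + _).
  rewrite eqn_mod_dvd //.
  have -> : (n - w + m.-1).+1 = n - w + m by lia.
  by rewrite dvdn_addl.
rewrite andbF  !divn_small //; lia.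
Qed.

Lemma Posz_sum (l : seq nat) (f : nat -> nat) :
  Posz (\sum_(x <- l) f x) = (\sum_(x <- l) Posz (f x))%R.
Proof.
elim: l => [|x l IH]; first by rewrite !big_nil.
by rewrite !big_cons PoszD IH.
Qed.

End Aux.

Theorem proposition2p9 (S : numsg) :
  (* (i) *)
  (forall x, inX S x -> (0 <= delta S x)%R) /\
  (* (ii) m = |P| + |X ∩ D| *)
  (exists sP sXD : seq nat,
      enumerates sP (inP S) /\
      enumerates sXD (fun x => inX S x && inD S x) /\
      mult S = size sP + size sXD) /\
  (* (iii) |L| = q + tau(X) *)
  (exists sX : seq nat,
      enumerates sX (inX S) /\
      ((cardL S)%:Z = (depth S)%:Z + tau S sX)%R).
Proof.
have m0 := m_gt0 S.
have [uX memX] := sX_enum S.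
split.
  move=> x /andP[ap _]; rewrite /delta divz_ge0 ?ltz_nat // subr_ge0 lez_nat.
  have := apery_lt ap; lia.
split.
  exists (mult S :: filter (predC (inD S)) (sX S)), (filter (inD S) (sX S)).
  split.
    split.
      rewrite /= filter_uniq // andbT mem_filter memX /inX /apery subnn leqnn nsg_0.
      by rewrite !andbF.
    by move=> x; rewrite inP_iff in_cons mem_filter memX /= andbC.
  split.
    split; [by rewrite filter_uniq | by move=> x; rewrite mem_filter memX andbC].
  rewrite /= !size_filter addSn addnC count_predC size_map size_iota; lia.
exists (sX S); split; first exact: sX_enum S.
pose F r := (conductor S + (mult S).-1 - a S r) %/ mult S.
have hL : cardL S = \sum_(r < mult S) F r.
  rewrite /cardL (count_res S); apply: eq_bigr => r _.
  have ar : a S r %% mult S = r.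
    by case: (a_spec S r) => _ -> _; rewrite modn_small.
  rewrite /F -(count_class S) ar; apply: eq_count => s.
  case e: (s %% mult S == r) => //=.
  by apply: S_iff; rewrite (eqP e) modn_small.
have hT : tau S (sX S) = (\sum_(x <- sX S) Posz ((conductor S + (mult S).-1 - x) %/ mult S))%R.
  rewrite /tau big_seq [in RHS]big_seq; apply: eq_bigr => x.
  rewrite memX => /andP[ap _]; have := apery_lt ap => lt.
  rewrite /delta subzn; last lia.
  rewrite divz_nat; congr (Posz (_ %/ _)); lia.
rewrite hT hL /sX big_map /depth -Posz_sum -PoszD; congr Posz.
rewrite -(big_mkord xpredT F) (big_ltn m0) /F a0 subn0; congr (_ + _).
by rewrite /index_iota subn1.
Qed.
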